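(* Let $n\ge1$, $m\ge0$ and let $v,u$ be vertices of the Yoke graph $Y_{n,m}$. Then $d_{Y_{n,m}}(v,u)=d_{Z_{n,m}}(v-u,0)$, where $v-u=(v_0-u_0,\dots,v_{m+1}-u_{m+1})$ (differences in coordinates $0,m+1$ taken in $\mathbb{Z}_n$, in coordinates $1,\dots,m$ in $\mathbb{Z}$), which is a vertex of $Z_{n,m}$, and $d_G$ denotes graph distance in $G$.
   Context: Elements of $\mathbb{Z}_n$ are identified with representatives in $\{0,\dots,n-1\}$. For $S\subseteq\mathbb{Z}$, consider vertices $u=(u_0,\dots,u_{m+1})\in\mathbb{Z}_n\times S^m\times\mathbb{Z}_n$ with $\sum u_i\equiv0\pmod n$; $u,v$ adjacent if there is $0\leq i\leq m$ with $u_j=v_j$ for $j\notin\{i,i+1\}$ and either ($u_i=v_i+1$, $u_{i+1}=v_{i+1}-1$) or ($u_i=v_i-1$, $u_{i+1}=v_{i+1}+1$), arithmetic in coordinates $0,m+1$ being in $\mathbb{Z}_n$ and in coordinates $1,\dots,m$ in $\mathbb{Z}$. $Y_{n,m}$ is the case $S=\{0,1\}$ and $Z_{n,m}$ the case $S=\{-1,0,1\}$. $0$ is the all-zero vertex. *)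

(* Defs.v *)
From mathcomp Require Import all_boot all_order all_algebra.
Set Implicit Arguments. Unset Strict Implicit. Unset Printing Implicit Defensive.
Import Order.TTheory GRing.Theory Num.Theory.
Local Open Scope ring_scope.

(* Vertices are sequences u = [u_0; ...; u_(m+1)] of integers.
   Coordinates 0 and m+1 are elements of Z_n, represented by their
   representative in {0,...,n-1}; coordinates 1..m lie in S. *)

Definition is_end (m j : nat) : bool := (j == 0)%N || (j == m.+1)%N.

Definition coord_eq (n m j : nat) (a b : int) : bool :=
  if is_end m j then ((a - b) %% n%:Z)%Z == 0 else a == b.

Definition vertex (S : int -> bool) (n m : nat) (u : seq int) : bool :=
  [&& size u == m.+2,
      all (fun j => if is_end m j then (0 <= u`_j) && (u`_j < n%:Z) else S u`_j)
          (iota 0 m.+2)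
    & ((\sum_(j < m.+2) u`_j) %% n%:Z)%Z == 0].

Definition adj (S : int -> bool) (n m : nat) (u v : seq int) : Prop :=
  [/\ vertex S n m u, vertex S n m v &
  exists i : nat, (i <= m)%N /\
    (forall j, (j < m.+2)%N -> j != i -> j != i.+1 -> u`_j = v`_j) /\
    exists e : int, (e = 1 \/ e = -1) /\
      coord_eq n m i u`_i (v`_i + e) /\
      coord_eq n m i.+1 u`_(i.+1) (v`_(i.+1) - e)].

Definition SY : int -> bool := fun a => (0 <= a) && (a <= 1).
Definition SZ : int -> bool := fun a => (-1 <= a) && (a <= 1).

Definition Yadj (n m : nat) := adj SY n m.
Definition Zadj (n m : nat) := adj SZ n m.

Fixpoint walk (R : seq int -> seq int -> Prop) (k : nat) (x y : seq int) : Prop :=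
  match k with
  | 0 => x = y
  | k'.+1 => exists z, R x z /\ walk R k' z y
  end.

(* d is the graph distance from x to y (no such d if unreachable) *)
Definition is_dist (R : seq int -> seq int -> Prop) (x y : seq int) (d : nat) : Prop :=
  walk R d x y /\ forall k, walk R k x y -> (d <= k)%N.

Definition vsub (n m : nat) (v u : seq int) : seq int :=
  [seq (if is_end m j then ((v`_j - u`_j) %% n%:Z)%Z else v`_j - u`_j) | j <- iota 0 m.+2].

Definition zero_vertex (m : nat) : seq int := nseq m.+2 0.

(* Main.v *)
Require Import Defs.
From mathcomp Require Import all_boot all_order all_algebra.
From mathcomp Require Import zify ring lra.
Import Order.TTheory GRing.Theory Num.Theory.
Set Implicit Arguments. Unset Strict Implicit. Unset Printing Implicit Defensive.
Local Open Scope ring_scope.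

Definition cg (n : nat) (a b : int) := exists k : int, a - b = k * n%:Z.

Lemma cg_refl n a : cg n a a.
Proof. by exists 0; rewrite subrr mul0r. Qed.
Lemma cg_sym n a b : cg n a b -> cg n b a.
Proof. by case=> k h; exists (-k); rewrite mulNr -h opprB. Qed.
Lemma cg_trans n a b c : cg n a b -> cg n b c -> cg n a c.
Proof. case=> k h [l h']; exists (k + l); rewrite mulrDl -h -h'; ring. Qed.
Lemma cg_add n a b c d : cg n a b -> cg n c d -> cg n (a + c) (b + d).
Proof. case=> k h [l h']; exists (k + l); rewrite mulrDl -h -h'; ring. Qed.
Lemma cg_opp n a b : cg n a b -> cg n (- a) (- b).
Proof. case=> k h; exists (- k); rewrite mulNr -h; ring. Qed.
Lemma cg_mod n a : cg n ((a %% n%:Z)%Z) a.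
Proof. exists (- (a %/ n%:Z)%Z); rewrite {2}(divz_eq a n%:Z); ring. Qed.
Lemma mod0_cg n a : ((a %% n%:Z)%Z == 0) <-> cg n a 0.
Proof.
split.
  move/eqP=> h; exists (a %/ n%:Z)%Z; rewrite {1}(divz_eq a n%:Z) h; ring.
by case=> k; rewrite subr0 => ->; rewrite modzMl.
Qed.

Lemma cg_small n a b : 0 <= a < n%:Z -> 0 <= b < n%:Z -> cg n a b -> a = b.
Proof. move=> /andP[h1 h2] /andP[h3 h4] [k hk].
have [kp|kn|k0] := ltrgtP k 0.
- have : k * n%:Z <= - n%:Z by rewrite -mulN1r ler_pM2r; lia.
  lia.
- have : n%:Z <= k * n%:Z by rewrite -{1}(mul1r n%:Z) ler_pM2r; lia.
  lia.
- move: hk; rewrite k0 mul0r; lia.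
Qed.

Lemma cg_sum n N (f g : nat -> int) : (forall j, (j < N)%N -> cg n (f j) (g j)) ->
  cg n (\sum_(j < N) f j) (\sum_(j < N) g j).
Proof.
elim: N => [|N IH] h; first by rewrite !big_ord0; apply: cg_refl.
rewrite !big_ord_recr /=; apply: cg_add; last exact: h.
by apply: IH => j hj; apply: h; lia.
Qed.

Lemma vertexP S n m u : vertex S n m u <->
  [/\ size u = m.+2,
      (forall j, (j < m.+2)%N -> if is_end m j then (0 <= u`_j) && (u`_j < n%:Z) else S u`_j)
    & cg n (\sum_(j < m.+2) u`_j) 0].
Proof.
rewrite /vertex; split.
  case/and3P=> /eqP h1 /allP h2 /mod0_cg h3; split => // j hj.
  by apply: h2; rewrite mem_iota.
case=> h1 h2 h3; apply/and3P; split; first by apply/eqP.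
  by apply/allP => j; rewrite mem_iota => /andP[_ hj]; apply: h2.
by apply/mod0_cg.
Qed.

Lemma nth_mk (f : nat -> int) N j : (j < N)%N ->
  nth 0 [seq f i | i <- iota 0 N] j = f j.
Proof. by move=> h; rewrite (nth_map 0%N) ?size_iota // nth_iota. Qed.

Lemma size_mk (f : nat -> int) N : size [seq f i | i <- iota 0 N] = N.
Proof. by rewrite size_map size_iota. Qed.

Lemma nth_vsub n m v u j : (j < m.+2)%N ->
  (vsub n m v u)`_j = if is_end m j then ((v`_j - u`_j) %% n%:Z)%Z else v`_j - u`_j.
Proof. by move=> h; rewrite /vsub nth_mk. Qed.

Lemma is_endF m j : (1 <= j <= m)%N -> is_end m j = false.
Proof. rewrite /is_end => h; apply/negbTE; apply/negP => /orP[] /eqP; lia. Qed.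

Fixpoint P (f : nat -> int) (l : nat) : int :=
  if l is l'.+1 then P f l' + f l else 0.
Fixpoint Ssum (g : nat -> int) (L : nat) : nat :=
  if L is L'.+1 then (Ssum g L' + absz (g L'))%N else 0%N.
Definition cost m (f : nat -> int) (t : int) : nat := Ssum (fun l => t + P f l) m.+1.


Lemma P_ext f g l : (forall j, (1 <= j <= l)%N -> f j = g j) -> P f l = P g l.
Proof.
elim: l => [|l IH] h //=; rewrite (h l.+1) ?IH //; last by lia.
by move=> j hj; apply: h; lia.
Qed.

Lemma Ssum_ext f g L : (forall l, (l < L)%N -> f l = g l) -> Ssum f L = Ssum g L.
Proof.
elim: L => [|L IH] h //=; rewrite (h L) ?IH //.
by move=> j hj; apply: h; lia.
Qed.

Lemma F_move m i (e t : int) (f g : nat -> int) : (i <= m)%N ->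
  (forall j, (1 <= j <= m)%N -> f j - g j = (if j == i then e else 0) - (if j == i.+1 then e else 0)) ->
  forall l, (l <= m)%N -> (t + (if i == 0%N then e else 0)) + P f l = t + P g l + (if l == i then e else 0).
Proof.
move=> hi h; elim=> [|l IH] hl /=.
  by rewrite !addr0 eq_sym.
have := h l.+1; rewrite eqSS => h1.
have {}h1 := h1 ltac:(lia).
have {}IH := IH ltac:(lia).
move: h1 IH; case: (l.+1 == i); case: (l == i); case: (i == 0%N); lia.
Qed.

Lemma Ssum_le1 (f g : nat -> int) i e L : (e = 1 \/ e = -1) ->
  (forall l, (l < L)%N -> f l = g l + (if l == i then e else 0)) ->
  (Ssum f L <= Ssum g L + (i < L))%N.
Proof.
move=> he; elim: L => [|L IH] h //=.
have {}IH := IH (fun l hl => h l ltac:(lia)).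
have := h L ltac:(lia).
case: (eqVneq L i) => [eLi|ne] -> .
  subst i; move: IH; rewrite ltnn ltnSn; case: he => ->; lia.
have : (i < L.+1)%N = (i < L)%N by apply/idP/idP; lia.
move=> ->; lia.
Qed.

Lemma Ssum_dec (f g : nat -> int) i e L : (i < L)%N -> (absz (f i) + 1 = absz (g i))%N ->
  (forall l, (l < L)%N -> f l = g l + (if l == i then e else 0)) ->
  (Ssum f L + 1 = Ssum g L)%N.
Proof.
move=> hiL ha; elim: L hiL => [|L IH] hiL h //=.
have [iL|iL] := ltnP i L.
  have {}IH := IH iL (fun l hl => h l ltac:(lia)).
  rewrite (h L) //; have : (L == i) = false by apply/eqP; lia.
  move=> ->; rewrite addr0; lia.
have iE : i = L by lia.
subst i.
rewrite (@Ssum_ext f g L); first by lia.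
move=> l hl; rewrite h; last by lia.
have /negbTE -> : l != L by apply/eqP; lia.
by rewrite addr0.
Qed.

Lemma Ssum0 g L : Ssum g L = 0%N -> forall l, (l < L)%N -> g l = 0.
Proof.
elim: L => [|L IH] //= h l hl.
have [lL|lL] := ltnP l L; first by apply: IH => //; lia.
have -> : l = L by lia.
lia.
Qed.

Lemma Ssum_pos g L : Ssum g L <> 0%N -> exists l, (l < L)%N /\ g l <> 0.
Proof.
elim: L => [|L IH] //= h.
case: (absz (g L) =P 0%N) => h2.
  have [l [hl hg]] := IH ltac:(lia). by exists l; split => //; lia.
by exists L; split => //; lia.
Qed.

Lemma find_pos m (F x y : nat -> int) :
  (forall j, (1 <= j <= m)%N -> (x j = 0 \/ x j = 1) /\ (y j = 0 \/ y j = 1)) ->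
  (forall j, (1 <= j <= m)%N -> F j - F j.-1 = x j - y j) ->
  forall i0, (i0 <= m)%N -> 0 < F i0 ->
  exists i, [/\ (i <= m)%N, 0 < F i, (i = 0%N \/ x i = 1) & (i = m \/ x i.+1 = 0)].
Proof.
move=> hxy hF.
have R : forall k i, (m - i = k)%N -> (i <= m)%N -> 0 < F i ->
    exists i', [/\ (i' <= m)%N, 0 < F i' & (i' = m \/ x i'.+1 = 0)].
  elim=> [|k IH] i hk him hFi.
    by exists i; split => //; left; lia.
  have [[hx|hx] hy] := hxy i.+1 ltac:(lia).
    by exists i; split => //; right.
  have := hF i.+1 ltac:(lia); rewrite /= => hd.
  apply: (IH i.+1); lia.
have L : forall i, (i <= m)%N -> 0 < F i -> (i = m \/ x i.+1 = 0) ->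
    exists i', [/\ (i' <= m)%N, 0 < F i', (i' = 0%N \/ x i' = 1) & (i' = m \/ x i'.+1 = 0)].
  elim=> [|i IH] him hFi hr.
    by exists 0%N; split => //; left.
  have [[hx|hx] hy] := hxy i.+1 ltac:(lia); last first.
    by exists i.+1; split => //; right.
  have := hF i.+1 ltac:(lia); rewrite /= => hd.
  apply: IH; try lia.

move=> i0 hi0 hF0.
have [i' [h1 h2 h3]] := R _ i0 erefl hi0 hF0.
exact: (L i' h1 h2 h3).
Qed.

Lemma sum_split m (f : nat -> int) :
  \sum_(j < m.+2) f j = f 0%N + \sum_(j < m) f j.+1 + f m.+1.
Proof. by rewrite big_ord_recr big_ord_recl /=. Qed.

Lemma vsub_vertex n m v u : (1 <= n)%N -> vertex SY n m v -> vertex SY n m u ->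
  vertex SZ n m (vsub n m v u).
Proof.
move=> hn /vertexP [sv cv tv] /vertexP [su cu tu]; apply/vertexP; split.
- by rewrite size_mk.
- move=> j hj; rewrite nth_vsub //.
  have := cv j hj; have := cu j hj.
  case: (is_end m j).
    by move=> _ _; rewrite modz_ge0 ?ltz_pmod //; lia.
  by rewrite /SY /SZ => /andP[h1 h2] /andP[h3 h4]; apply/andP; split; lia.
- apply: (cg_trans (b := \sum_(j < m.+2) (v`_j - u`_j))).
    apply: (cg_sum (f := fun j => (vsub n m v u)`_j) (g := fun j => v`_j - u`_j)) => j hj; rewrite nth_vsub //.
    by case: (is_end m j); [apply: cg_mod | apply: cg_refl].
  rewrite sumrB -(subr0 0); apply: cg_add => //; exact: cg_opp.
Qed.

Lemma vsub_zero n m u : vsub n m u u = zero_vertex m.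
Proof.
apply: (@eq_from_nth _ 0); first by rewrite size_mk size_nseq.
move=> j; rewrite size_mk => hj; rewrite nth_vsub // nth_nseq hj subrr.
by case: (is_end m j); rewrite ?mod0z.
Qed.

Lemma coord_eqP n m j a b : coord_eq n m j a b <-> (if is_end m j then cg n a b else a = b).
Proof.
rewrite /coord_eq; case: (is_end m j); last by split => [/eqP|->].
split; first by move/mod0_cg=> [k h]; exists k; rewrite -h subr0.
by case=> k h; apply/mod0_cg; exists k; rewrite subr0.
Qed.


Lemma modE (a d : int) : (a %% d)%Z = a - (a %/ d)%Z * d.
Proof. by rewrite {2}(divz_eq a d); ring. Qed.

Lemma Yadj_Zadj n m u x y : (1 <= n)%N -> vertex SY n m u -> Yadj n m x y ->
  Zadj n m (vsub n m x u) (vsub n m y u).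
Proof.
move=> hn hu [hx hy [i [hi [hj [e [he [c1 c2]]]]]]].
split; try exact: vsub_vertex.
exists i; split => //; split.
  by move=> j hjm h1 h2; rewrite !nth_vsub // hj.
exists e; split => //.
move: c1 c2; rewrite !coord_eqP !nth_vsub //; try lia.
case: (is_end m i); case: (is_end m i.+1).
- move=> [k1 h1] [k2 h2]; split.
    exists (k1 - ((x`_i - u`_i) %/ n%:Z)%Z + ((y`_i - u`_i) %/ n%:Z)%Z); rewrite !modE; lia.
  exists (k2 - ((x`_i.+1 - u`_i.+1) %/ n%:Z)%Z + ((y`_i.+1 - u`_i.+1) %/ n%:Z)%Z); rewrite !modE; lia.
- move=> [k1 h1] h2; split; last by lia.
  exists (k1 - ((x`_i - u`_i) %/ n%:Z)%Z + ((y`_i - u`_i) %/ n%:Z)%Z); rewrite !modE; lia.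
- move=> h1 [k2 h2]; split; first by lia.
  exists (k2 - ((x`_i.+1 - u`_i.+1) %/ n%:Z)%Z + ((y`_i.+1 - u`_i.+1) %/ n%:Z)%Z); rewrite !modE; lia.
- move=> h1 h2; split; lia.
Qed.

Lemma walkYZ n m u k x y : (1 <= n)%N -> vertex SY n m u -> walk (Yadj n m) k x y ->
  walk (Zadj n m) k (vsub n m x u) (vsub n m y u).
Proof.
move=> hn hu; elim: k x => [|k IH] x /=; first by move->.
by case=> z [hxz hz]; exists (vsub n m z u); split; [exact: Yadj_Zadj | exact: IH].
Qed.

Lemma P0 l : P (fun _ => 0) l = 0.
Proof. by elim: l => //= l ->; rewrite addr0. Qed.
Lemma Ssum0' L : Ssum (fun _ => 0) L = 0%N.
Proof. by elim: L => //= L ->. Qed.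

Lemma adj_mid n m w z i e : (i <= m)%N ->
  (forall j, (j < m.+2)%N -> j != i -> j != i.+1 -> w`_j = z`_j) ->
  coord_eq n m i w`_i (z`_i + e) -> coord_eq n m i.+1 w`_(i.+1) (z`_(i.+1) - e) ->
  forall j, (1 <= j <= m)%N ->
    w`_j - z`_j = (if j == i then e else 0) - (if j == i.+1 then e else 0).
Proof.
move=> hi hj c1 c2 j hjm.
case: (eqVneq j i) hjm => [->|ne1] hjm.
  have /negbTE -> : i != i.+1 by apply/eqP; lia.
  move: c1; rewrite coord_eqP is_endF; last by lia.
  move=> ->; rewrite subr0; ring.
case: (eqVneq j i.+1) hjm => [->|ne2] hjm.
  move: c2; rewrite coord_eqP is_endF; last by lia.
  move=> ->; rewrite sub0r; ring.
by rewrite hj //; [rewrite subrr subr0 | lia].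
Qed.

Lemma lowerZ n m k w : walk (Zadj n m) k w (zero_vertex m) ->
  exists t, cg n t w`_0 /\ (cost m (fun j => (w`_j)%R) t <= k)%N.
Proof.
elim: k w => [|k IH] w /=.
  move=> ->; exists 0; rewrite nth_nseq; split.
    exact: cg_refl.
  rewrite /cost (Ssum_ext (g := fun _ => 0)) ?Ssum0' // => l hl.
  rewrite (P_ext (g := fun _ => 0)) ?P0 ?addr0 // => j hj.
  by rewrite nth_nseq; case: ifP.
case=> z [[hw hz [i [hi [hj [e [he [c1 c2]]]]]]] hwalk].
have [t' [ht' hc]] := IH z hwalk.
have hmid := adj_mid hi hj c1 c2.
exists (t' + (if i == 0%N then e else 0)); split.
  case: (eqVneq i 0%N) => [i0|i0].
    subst i; move: c1; rewrite coord_eqP /= => c1.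
    by apply: cg_sym; apply: (cg_trans c1); apply: cg_add; [exact: cg_sym | exact: cg_refl].
  by rewrite addr0 hj // eq_sym.
have := @Ssum_le1 (fun l => (t' + (if i == 0%N then e else 0)) + P (fun j => w`_j) l)
   (fun l => t' + P (fun j => z`_j) l) i e m.+1 he.
rewrite /cost; move=> h; apply: leq_trans (h _) _; last by rewrite ltnS hi addn1; exact: hc.
move=> l hl; apply: (F_move (m := m)) => //; lia.
Qed.

Definition nv n m j (a : int) : int := if is_end m j then (a %% n%:Z)%Z else a.
Definition mv n m (x : seq int) i (e : int) : seq int :=
  [seq (if j == i then nv n m j (x`_j + e) else if j == i.+1 then nv n m j (x`_j - e) else x`_j)
  | j <- iota 0 m.+2].

Lemma nth_mv n m x i e j : (j < m.+2)%N -> (mv n m x i e)`_j =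
  if j == i then nv n m j (x`_j + e) else if j == i.+1 then nv n m j (x`_j - e) else x`_j.
Proof. by move=> h; rewrite /mv nth_mk. Qed.

Lemma sum_ind N i (e : int) : \sum_(j < N) (if (j : nat) == i then e else 0) = if (i < N)%N then e else 0.
Proof.
elim: N => [|N IH]; first by rewrite big_ord0.
rewrite big_ord_recr /= IH.
case: (ltngtP i N) => h.
- by rewrite addr0 ifT //; lia.
- by rewrite addr0 ifF //; lia.
- by rewrite add0r ifT //; lia.
Qed.

Lemma nv_cg n m j a : cg n (nv n m j a) a.
Proof. rewrite /nv; case: (is_end m j); [exact: cg_mod | exact: cg_refl]. Qed.

Lemma mv_vertex n m v i e : (1 <= n)%N -> vertex SY n m v -> (i <= m)%N ->
  (i = 0%N \/ SY (v`_i + e)) -> (i = m \/ SY (v`_i.+1 - e)) ->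
  vertex SY n m (mv n m v i e).
Proof.
move=> hn /vertexP [sv cv tv] hi h1 h2; apply/vertexP; split.
- by rewrite size_mk.
- move=> j hj; rewrite nth_mv //.
  case: (eqVneq j i) => [ji|ji].
    subst j; rewrite /nv; case E: (is_end m i).
      by rewrite modz_ge0 ?ltz_pmod //; lia.
    by case: h1 => // h1; move: E; rewrite h1.
  case: (eqVneq j i.+1) => [ji1|ji1].
    subst j; rewrite /nv; case E: (is_end m i.+1).
      by rewrite modz_ge0 ?ltz_pmod //; lia.
    by case: h2 => // h2; move: E; rewrite h2 /is_end eqxx orbT.
  exact: cv.
- apply: (cg_trans (b := \sum_(j < m.+2) (v`_j + ((if (j:nat) == i then e else 0) - (if (j:nat) == i.+1 then e else 0))))).
    apply: (cg_sum (f := fun j => (mv n m v i e)`_j)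
      (g := fun j => v`_j + ((if j == i then e else 0) - (if j == i.+1 then e else 0)))) => j hj.
    rewrite nth_mv //; case: (eqVneq j i) => [ji|ji].
      subst j; have /negbTE -> : i != i.+1 by apply/eqP; lia.
      by rewrite subr0; exact: nv_cg.
    case: (eqVneq j i.+1) => [ji1|ji1].
      by rewrite sub0r; exact: nv_cg.
    by rewrite subrr addr0; exact: cg_refl.
  rewrite big_split /= sumrB !sum_ind ifT ?ifT; try lia.
  by rewrite subrr addr0.
Qed.

Lemma mv_adj n m v i e : (1 <= n)%N -> vertex SY n m v -> (i <= m)%N -> (e = 1 \/ e = -1) ->
  vertex SY n m (mv n m v i e) -> Yadj n m v (mv n m v i e).
Proof.
move=> hn hv hi he hv'; split => //.
exists i; split => //; split.
  by move=> j hj h1 h2; rewrite nth_mv // (negbTE h1) (negbTE h2).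
exists (- e); split; first by case: he => ->; [right|left]; rewrite ?opprK.
rewrite !coord_eqP !nth_mv ?eqxx; try lia.
have /negbTE -> : i.+1 != i by apply/eqP; lia.
rewrite /nv; split.
  case: (is_end m i); last by ring.
  by exists ((v`_i + e) %/ n%:Z)%Z; rewrite modE; ring.
case: (is_end m i.+1); last by ring.
by exists ((v`_i.+1 - e) %/ n%:Z)%Z; rewrite modE; ring.
Qed.

Lemma mv_cg0 n m v u i e t : (i <= m)%N -> cg n t (v`_0 - u`_0) ->
  cg n (t + (if i == 0%N then e else 0)) ((mv n m v i e)`_0 - u`_0).
Proof.
move=> hi [k hk]; rewrite nth_mv //.
case: (eqVneq i 0%N) => [i0|i0].
  subst i; rewrite /= /nv /is_end eqxx /=.
  rewrite modE; move: ((v`_0 + e) %/ n%:Z)%Z => q.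
  by exists (k + q); rewrite mulrDl -hk; ring.
by rewrite addr0 /=; exists k.
Qed.

Lemma mv_F n m v u i e t : (i <= m)%N -> forall l, (l <= m)%N ->
  (t + (if i == 0%N then e else 0)) + P (fun j => (mv n m v i e)`_j - u`_j) l =
  t + P (fun j => v`_j - u`_j) l + (if l == i then e else 0).
Proof.
move=> hi; apply: F_move => // j hj; rewrite nth_mv; last by lia.
rewrite /nv is_endF //.
case: (eqVneq j i) => [ji|ji].
  subst j; have /negbTE -> : i != i.+1 by apply/eqP; lia.
  ring.
case: (eqVneq j i.+1) => [ji1|ji1]; ring.
Qed.

Lemma eqY n m v u t : vertex SY n m v -> vertex SY n m u -> cg n t (v`_0 - u`_0) ->
  cost m (fun j => v`_j - u`_j) t = 0%N -> v = u.
Proof.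
move=> /vertexP [sv cv tv] /vertexP [su cu tu] [k0 hk0] hc.
have hF := Ssum0 hc.
have t0 : t = 0 by have := hF 0%N erefl; rewrite /= addr0.
subst t.
have hmid : forall j, (1 <= j <= m)%N -> v`_j = u`_j.
  case=> [|j] hj; first by lia.
  have := hF j.+1 ltac:(lia); have := hF j ltac:(lia); rewrite /= !add0r => ->.
  by rewrite add0r => /eqP; rewrite subr_eq0 => /eqP.
have e0 : v`_0 = u`_0.
  apply: cg_small; first exact: (cv 0%N erefl); first exact: (cu 0%N erefl).
  by exists (- k0); rewrite mulNr -hk0; ring.
have em : v`_m.+1 = u`_m.+1.
  have := cv m.+1 (ltnSn _); have := cu m.+1 (ltnSn _); rewrite /is_end eqxx orbT => h1 h2.
  apply: (cg_small (n := n)) => //.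
  move: tv tu; rewrite !sum_split.
  have -> : \sum_(j < m) v`_j.+1 = \sum_(j < m) u`_j.+1.
    by apply: eq_bigr => j _; apply: hmid; have := ltn_ord j; lia.
  move: (\sum_(j < m) u`_j.+1) => M [k1 h1'] [k2 h2'].
  by exists (k1 - k2); rewrite mulrBl -h1' -h2' e0; ring.
apply: (@eq_from_nth _ 0); first by rewrite sv su.
move=> j; rewrite sv => hj.
case: (eqVneq j 0%N) => [->|j0] //.
case: (eqVneq j m.+1) => [->|jm] //.
apply: hmid; lia.
Qed.

Lemma upperY n m : (1 <= n)%N -> forall c v u t, vertex SY n m v -> vertex SY n m u ->
  cg n t (v`_0 - u`_0) -> cost m (fun j => v`_j - u`_j) t = c -> walk (Yadj n m) c v u.
Proof.
move=> hn; elim=> [|c IH] v u t hv hu ht hc; first exact: eqY hv hu ht hc.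
set F := fun l => t + P (fun j => v`_j - u`_j) l.
have [l0 [hl0 hF0]] := @Ssum_pos F m.+1 ltac:(rewrite /F; move: hc; rewrite /cost => ->; lia).
have hv' := hv; have hu' := hu.
move: hv' hu' => /vertexP [sv cv tv] /vertexP [su cu tu].
have hxy : forall j, (1 <= j <= m)%N -> (v`_j = 0 \/ v`_j = 1) /\ (u`_j = 0 \/ u`_j = 1).
  move=> j hj; have := cv j ltac:(lia); have := cu j ltac:(lia); rewrite is_endF //.
  by rewrite /SY => /andP[a1 a2] /andP[a3 a4]; split; lia.
have hD : forall j, (1 <= j <= m)%N -> F j - F j.-1 = v`_j - u`_j.
  by case=> [|j] hj; [lia | rewrite /F /=; ring].
have step : forall i e, (i <= m)%N -> (e = 1 \/ e = -1) ->
    (i = 0%N \/ SY (v`_i + e)) -> (i = m \/ SY (v`_i.+1 - e)) ->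
    (absz (F i + e)%R + 1 = absz (F i))%N -> walk (Yadj n m) c.+1 v u.
  move=> i e hi he h1 h2 ha.
  have hvv := mv_vertex hn hv hi h1 h2.
  exists (mv n m v i e); split; first exact: mv_adj.
  apply: (IH _ _ (t + (if i == 0%N then e else 0))) => //; first exact: mv_cg0.
  suff : (cost m (fun j => ((mv n m v i e)`_j - u`_j)%R) (t + (if i == 0%N then e else 0))%R + 1
     = cost m (fun j => (v`_j - u`_j)%R) t)%N by rewrite hc; lia.
  rewrite /cost; apply: (Ssum_dec (i := i) (e := e)) => //; first by rewrite /F in ha; rewrite mv_F // eqxx.
  by move=> l hl; apply: mv_F; lia.
have [Fpos|Fneg] : 0 < F l0 \/ F l0 < 0 by lia.
  have [i [hi hp hl hr]] := find_pos hxy hD (i0 := l0) ltac:(lia) Fpos.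
  apply: (step i (-1)) => //; first by right.
  - case: hl => [->|hl]; [by left | right; rewrite hl /SY; apply/andP; lia].
  - case: hr => [->|hr]; [by left | right; rewrite hr /SY; apply/andP; lia].
  - lia.
have hxy' : forall j, (1 <= j <= m)%N ->
    (1 - v`_j = 0 \/ 1 - v`_j = 1) /\ (1 - u`_j = 0 \/ 1 - u`_j = 1).
  by move=> j hj; have := hxy j hj; lia.
have hD' : forall j, (1 <= j <= m)%N -> - F j - - F j.-1 = (1 - v`_j) - (1 - u`_j).
  by move=> j hj; have := hD j hj; lia.
have [i [hi hp hl hr]] := find_pos hxy' hD' (i0 := l0) ltac:(lia) ltac:(lia).
apply: (step i 1) => //; first by left.
- case: hl => [->|hl]; [by left | right; rewrite (_ : v`_i = 0); [rewrite /SY; apply/andP; lia | lia]].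
- case: hr => [->|hr]; [by left | right; rewrite (_ : v`_i.+1 = 1); [rewrite /SY; apply/andP; lia | lia]].
- lia.
Qed.

Lemma ZtoY n m v u k : (1 <= n)%N -> vertex SY n m v -> vertex SY n m u ->
  walk (Zadj n m) k (vsub n m v u) (zero_vertex m) ->
  exists2 k', (k' <= k)%N & walk (Yadj n m) k' v u.
Proof.
move=> hn hv hu hw.
have [t [ht hc]] := lowerZ hw.
have ht' : cg n t (v`_0 - u`_0).
  by move: ht; rewrite nth_vsub // /is_end eqxx /= => ht; apply: (cg_trans ht); apply: cg_mod.
have hcost : cost m (fun j => (vsub n m v u)`_j) t = cost m (fun j => v`_j - u`_j) t.
  apply: Ssum_ext => l hl; congr (_ + _); apply: P_ext => j hj.
  by rewrite nth_vsub ?is_endF //; lia.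
exists (cost m (fun j => v`_j - u`_j) t); first by rewrite -hcost.
exact: upperY hn _ _ _ _ hv hu ht' erefl.
Qed.

Theorem lemma4p4 (n m : nat) (v u : seq int) :
  (1 <= n)%N -> vertex SY n m v -> vertex SY n m u ->
  vertex SZ n m (vsub n m v u) /\
  (forall d : nat, is_dist (Yadj n m) v u d <-> is_dist (Zadj n m) (vsub n m v u) (zero_vertex m) d).
Proof.
move=> hn hv hu; split; first exact: vsub_vertex.
have YZ : forall k, walk (Yadj n m) k v u -> walk (Zadj n m) k (vsub n m v u) (zero_vertex m).
  by move=> k hk; rewrite -(vsub_zero n m u); apply: walkYZ.
move=> d; split.
  case=> hw hmin; split; first exact: YZ.
  move=> k hk; have [k' hk' hw'] := ZtoY hn hv hu hk.
  exact: leq_trans (hmin _ hw') hk'.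
case=> hw hmin.
have [k' hk' hw'] := ZtoY hn hv hu hw.
have := hmin _ (YZ _ hw') => hdk.
have e : d = k' by apply/eqP; rewrite eqn_leq hdk hk'.
subst d; split => // k hk; exact: hmin _ (YZ _ hk).
Qed.
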